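(* Let $G:\mathbb{R}^2\to\mathbb{C}$ be quasi-periodic, and let $K,N\geq 8$ be integers and $(x,y)\in[0,1/K)\times[0,1/N)$. Assume $G(x+i/K,\,y+j/N)\neq 0$ for all $(i,j)\in\mathbb{Z}^2$, and let $H:\mathbb{R}^2\to\mathbb{R}$ be any function with $G=|G|e^{2\pi i H}$ at these points. Set $h_{i,j}=H(x+i/K,\,y+j/N)$ for $(i,j)\in\mathbb{Z}^2$. Then there exist integers $0\le i<K$ and $0\le j<N$ such that either $$\operatorname{dist}(h_{i+1,j}-h_{i,j},\mathbb{Z})>\tfrac18\quad\text{or}\quad \operatorname{dist}(h_{i,j+1}-h_{i,j},\mathbb{Z})>\tfrac18.$$
   Context: A function $G$ on $\mathbb{R}^2$ is quasi-periodic if $G(x,y+1)=G(x,y)$ and $G(x+1,y)=e^{2\pi i y}G(x,y)$ for all $(x,y)\in\mathbb{R}^2$. *)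

(* Defs.v *)
From Stdlib Require Import Reals ZArith.
Open Scope R_scope.

(* complex numbers as (real part, imaginary part) *)
Definition Cplx : Type := (R * R)%type.
Definition Cmul (z w : Cplx) : Cplx :=
  (fst z * fst w - snd z * snd w, fst z * snd w + snd z * fst w).
Definition Cscale (r : R) (z : Cplx) : Cplx := (r * fst z, r * snd z).
Definition Cnorm (z : Cplx) : R := sqrt (fst z * fst z + snd z * snd z).
Definition C0 : Cplx := (0, 0).
Definition e2pi (t : R) : Cplx := (cos (2 * PI * t), sin (2 * PI * t)).

Definition quasi_periodic (G : R -> R -> Cplx) : Prop :=
  forall x y : R, G x (y + 1) = G x y /\ G (x + 1) y = Cmul (e2pi y) (G x y).

Definition distZ (t : R) : R :=
  Rmin (t - IZR (Int_part t)) (IZR (Int_part t) + 1 - t).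

(* Main.v *)
Require Import Defs.
From Stdlib Require Import Reals ZArith Lra Lia Classical.
Open Scope R_scope.

Definition rr (t : R) : R := t - IZR (Int_part (t + /2)).
Definition isZ (t : R) : Prop := exists k : Z, t = IZR k.

Fixpoint ssum (f : nat -> R) (n : nat) : R :=
  match n with O => 0 | S m => ssum f m + f m end.

Lemma ssum_ext f g n : (forall i, f i = g i) -> ssum f n = ssum g n.
Proof. intros E; induction n; simpl; [reflexivity| rewrite IHn, E; reflexivity]. Qed.

Lemma abs_inv t c : Rabs t <= c -> -c <= t <= c.
Proof. unfold Rabs; destruct (Rcase_abs t); lra. Qed.

Lemma isZ_small t : isZ t -> Rabs t < 1 -> t = 0.
Proof.
  intros [k Hk] Ha; subst t. apply Rabs_def2 in Ha. destruct Ha as [H1 H2].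
  assert (H3 : IZR k < IZR 1) by lra. assert (H4 : IZR (-1) < IZR k) by lra.
  apply lt_IZR in H3; apply lt_IZR in H4.
  assert (k = 0%Z) by lia. subst; reflexivity.
Qed.

Lemma Int_part_unique k s : IZR k <= s < IZR k + 1 -> Int_part s = k.
Proof.
  intros [H1 H2]. unfold Int_part.
  rewrite <- (tech_up s (k + 1)); [ring| |]; rewrite plus_IZR; simpl; lra.
Qed.

Lemma rr_int t : isZ (t - rr t).
Proof. unfold rr. exists (Int_part (t + /2)). ring. Qed.

Lemma rr_bound t : - / 2 <= rr t < /2.
Proof. unfold rr. destruct (base_Int_part (t + /2)). lra. Qed.

Lemma rr_small t : distZ t <= 1/8 -> Rabs (rr t) <= 1/8.
Proof.
  unfold distZ, rr, Rmin. destruct (base_Int_part t) as [B1 B2].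
  destruct (Rle_dec _ _); intros Hd; apply Rabs_le.
  - rewrite (Int_part_unique (Int_part t)); lra.
  - rewrite (Int_part_unique (Int_part t + 1)); rewrite ?plus_IZR; simpl; lra.
Qed.

Lemma rr_shift t s : isZ (t - s) -> rr t = rr s.
Proof.
  intros Hz. assert (E : rr t - rr s = 0).
  { apply isZ_small.
    - destruct Hz as [k Hk]. destruct (rr_int t) as [a Ha]. destruct (rr_int s) as [b Hb].
      exists (k - a + b)%Z. rewrite plus_IZR, minus_IZR. lra.
    - pose proof (rr_bound t); pose proof (rr_bound s). apply Rabs_def1; lra. }
  lra.
Qed.

Definition al (h : Z -> Z -> R) i j := rr (h (i + 1)%Z j - h i j).
Definition be (h : Z -> Z -> R) i j := rr (h i (j + 1)%Z - h i j).

Lemma comb (h : Z -> Z -> R) (K N : nat) (y : R) :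
  (8 <= K)%nat -> (8 <= N)%nat ->
  (forall i, isZ (h i (Z.of_nat N) - h i 0%Z)) ->
  (forall j, isZ (h (Z.of_nat K) j - h 0%Z j - (y + IZR j / INR N))) ->
  exists i j : Z,
    (0 <= i < Z.of_nat K)%Z /\ (0 <= j < Z.of_nat N)%Z /\
    (distZ (h (i + 1)%Z j - h i j) > 1 / 8 \/
     distZ (h i (j + 1)%Z - h i j) > 1 / 8).
Proof.
  intros HK HN P1 P2. apply NNPP; intro Hn.
  assert (Hall : forall i j, (0 <= i < Z.of_nat K)%Z -> (0 <= j < Z.of_nat N)%Z ->
     Rabs (al h i j) <= 1/8 /\ Rabs (be h i j) <= 1/8).
  { intros i j Hi Hj; split; apply rr_small; apply Rnot_gt_le; intro Hc; apply Hn;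
    exists i, j; tauto. }
  assert (HNr : 8 <= INR N).
  { replace 8 with (INR 8) by (simpl; ring). apply le_INR; lia. }
  assert (S2 : forall i, al h i (Z.of_nat N) = al h i 0).
  { intros i. unfold al. apply rr_shift.
    destruct (P1 (i+1)%Z) as [a Ha]. destruct (P1 i) as [b Hb].
    exists (a - b)%Z. rewrite minus_IZR. lra. }
  assert (S3 : forall i j, (0 <= i < Z.of_nat K)%Z -> (0 <= j <= Z.of_nat N)%Z ->
     Rabs (al h i j) <= 1/8).
  { intros i j Hi Hj. destruct (Z.eq_dec j (Z.of_nat N)) as [->|Hne].
    - rewrite S2. apply (Hall i 0%Z); lia.
    - apply (Hall i j); lia. }
  destruct K as [|K']; [lia|].
  assert (Plaq : forall i j, (0 <= i)%Z -> (i + 1 < Z.of_nat (S K'))%Z ->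
     (0 <= j < Z.of_nat N)%Z ->
     al h i j + be h (i+1)%Z j - al h i (j+1)%Z - be h i j = 0).
  { intros i j Hi Hi1 Hj. apply isZ_small.
    - destruct (rr_int (h (i + 1)%Z j - h i j)) as [k1 E1].
      destruct (rr_int (h (i + 1)%Z (j+1)%Z - h (i+1)%Z j)) as [k2 E2].
      destruct (rr_int (h (i + 1)%Z (j+1)%Z - h i (j+1)%Z)) as [k3 E3].
      destruct (rr_int (h i (j+1)%Z - h i j)) as [k4 E4].
      exists (- (k1 + k2 - k3 - k4))%Z. rewrite opp_IZR, !minus_IZR, plus_IZR.
      unfold al, be. lra.
    - pose proof (abs_inv _ _ (proj1 (Hall i j ltac:(lia) Hj))).
      pose proof (abs_inv _ _ (proj2 (Hall i j ltac:(lia) Hj))).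
      pose proof (abs_inv _ _ (proj2 (Hall (i+1)%Z j ltac:(lia) Hj))).
      pose proof (abs_inv _ _ (S3 i (j+1)%Z ltac:(lia) ltac:(lia))).
      apply Rabs_def1; lra. }
  assert (Last : forall j, (0 <= j < Z.of_nat N)%Z ->
     al h (Z.of_nat K') j + be h 0 j + / INR N - al h (Z.of_nat K') (j+1)%Z
       - be h (Z.of_nat K') j = 0).
  { intros j Hj. apply isZ_small.
    - assert (EK : (Z.of_nat K' + 1)%Z = Z.of_nat (S K')) by lia.
      destruct (rr_int (h (Z.of_nat K' + 1)%Z j - h (Z.of_nat K') j)) as [k1 E1].
      destruct (rr_int (h 0%Z (j+1)%Z - h 0%Z j)) as [k2 E2].
      destruct (rr_int (h (Z.of_nat K' + 1)%Z (j+1)%Z - h (Z.of_nat K') (j+1)%Z)) as [k3 E3].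
      destruct (rr_int (h (Z.of_nat K') (j+1)%Z - h (Z.of_nat K') j)) as [k4 E4].
      destruct (P2 j) as [m1 F1]. destruct (P2 (j+1)%Z) as [m2 F2].
      rewrite EK in E1, E3.
      assert (Ej : IZR (j + 1) / INR N = IZR j / INR N + / INR N).
      { rewrite plus_IZR. field. lra. }
      rewrite Ej in F2.
      exists (- (k1 + k2 - k3 - k4) - (m2 - m1))%Z.
      rewrite !minus_IZR, opp_IZR, !minus_IZR, plus_IZR.
      unfold al, be. rewrite EK. lra.
    - pose proof (abs_inv _ _ (proj1 (Hall (Z.of_nat K') j ltac:(lia) Hj))).
      pose proof (abs_inv _ _ (proj2 (Hall (Z.of_nat K') j ltac:(lia) Hj))).
      pose proof (abs_inv _ _ (proj2 (Hall 0%Z j ltac:(lia) Hj))).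
      pose proof (abs_inv _ _ (S3 (Z.of_nat K') (j+1)%Z ltac:(lia) ltac:(lia))).
      assert (0 < / INR N <= 1/8).
      { split. apply Rinv_0_lt_compat; lra.
        replace (1/8) with (/8) by field. apply Rinv_le_contravar; lra. }
      apply Rabs_def1; lra. }
  set (A := fun j => ssum (fun m => al h (Z.of_nat m) j) (S K')).
  assert (Row : forall j, (0 <= j < Z.of_nat N)%Z -> A j - A (j+1)%Z = - / INR N).
  { intros j Hj.
    assert (Sub : forall m, (m < S K')%nat ->
      ssum (fun i => al h (Z.of_nat i) j) m - ssum (fun i => al h (Z.of_nat i) (j+1)%Z) m
      = be h 0 j - be h (Z.of_nat m) j).
    { induction m; intros Hm; cbn [ssum].
      - change (Z.of_nat 0) with 0%Z. lra.
      - rewrite Nat2Z.inj_succ. unfold Z.succ.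
        pose proof (IHm ltac:(lia)).
        pose proof (Plaq (Z.of_nat m) j ltac:(lia) ltac:(lia) Hj). lra. }
    unfold A. cbn [ssum].
    pose proof (Sub K' ltac:(lia)). pose proof (Last j Hj). lra. }
  assert (Col : forall m, (m <= N)%nat -> A (Z.of_nat m) = A 0%Z + INR m / INR N).
  { induction m; intros Hm.
    - simpl. unfold Rdiv. ring.
    - rewrite Nat2Z.inj_succ. unfold Z.succ. rewrite S_INR.
      pose proof (IHm ltac:(lia)). pose proof (Row (Z.of_nat m) ltac:(lia)).
      assert ((INR m + 1) / INR N = INR m / INR N + / INR N) by (field; lra).
      lra. }
  pose proof (Col N ltac:(lia)).
  assert (A (Z.of_nat N) = A 0%Z).
  { unfold A. apply ssum_ext. intros i. apply S2. }
  assert (INR N / INR N = 1) by (field; lra).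
  lra.
Qed.

Lemma e2pi_eq c c' u v : 0 < c -> 0 < c' ->
  Cscale c (e2pi u) = Cscale c' (e2pi v) -> isZ (u - v).
Proof.
  intros Hc Hc' E. unfold Cscale, e2pi in E; simpl in E. injection E as E1 E2.
  pose proof (sin2_cos2 (2 * PI * u)) as T1. pose proof (sin2_cos2 (2 * PI * v)) as T2.
  unfold Rsqr in T1, T2.
  assert (Ecc : c * c = c' * c').
  { transitivity ((c * cos (2*PI*u))^2 + (c * sin (2*PI*u))^2).
    - replace (c * c) with (c * c * 1) by ring. rewrite <- T1. ring.
    - rewrite E1, E2. replace (c' * c') with (c' * c' * 1) by ring. rewrite <- T2. ring. }
  assert (Ec : c = c') by nra. subst c'.
  apply Rmult_eq_reg_l in E1; [|lra]. apply Rmult_eq_reg_l in E2; [|lra].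
  assert (Cd : cos (2 * (PI * (u - v))) = 1).
  { replace (2 * (PI * (u - v))) with (2*PI*u - 2*PI*v) by ring.
    rewrite cos_minus, E1, E2. lra. }
  rewrite cos_2a_sin in Cd.
  assert (Sd : sin (PI * (u - v)) = 0) by nra.
  destruct (sin_eq_0_0 _ Sd) as [k Hk]. exists k.
  pose proof PI_RGT_0.
  apply (Rmult_eq_reg_l PI); [|lra]. rewrite Hk. ring.
Qed.

Lemma Cmul_e2pi a b c : Cmul (e2pi a) (Cscale c (e2pi b)) = Cscale c (e2pi (a + b)).
Proof.
  unfold Cmul, Cscale, e2pi; simpl.
  replace (2 * PI * (a + b)) with (2*PI*a + 2*PI*b) by ring.
  rewrite cos_plus, sin_plus. f_equal; ring.
Qed.

Lemma norm_pos (z : Cplx) t : z <> C0 -> z = Cscale (Cnorm z) (e2pi t) -> 0 < Cnorm z.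
Proof.
  intros Hz E. destruct (Rle_lt_or_eq_dec 0 (Cnorm z)) as [H|H].
  - unfold Cnorm. apply sqrt_pos.
  - exact H.
  - exfalso. apply Hz. rewrite E, <- H. unfold Cscale, C0. f_equal; ring.
Qed.

Theorem lemma2 (G : R -> R -> Cplx) (K N : nat) (x y : R) (H : R -> R -> R) :
  quasi_periodic G ->
  (8 <= K)%nat -> (8 <= N)%nat ->
  0 <= x < 1 / INR K -> 0 <= y < 1 / INR N ->
  (forall i j : Z, G (x + IZR i / INR K) (y + IZR j / INR N) <> C0) ->
  (forall i j : Z,
     G (x + IZR i / INR K) (y + IZR j / INR N) =
     Cscale (Cnorm (G (x + IZR i / INR K) (y + IZR j / INR N)))
            (e2pi (H (x + IZR i / INR K) (y + IZR j / INR N)))) ->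
  let h := fun i j : Z => H (x + IZR i / INR K) (y + IZR j / INR N) in
  exists i j : Z,
    (0 <= i < Z.of_nat K)%Z /\ (0 <= j < Z.of_nat N)%Z /\
    (distZ (h (i + 1)%Z j - h i j) > 1 / 8 \/
     distZ (h i (j + 1)%Z - h i j) > 1 / 8).
Proof.
  intros Hq HK HN Hx Hy Hnz Hpol h.
  assert (HKr : 8 <= INR K).
  { replace 8 with (INR 8) by (simpl; ring). apply le_INR; lia. }
  assert (HNr : 8 <= INR N).
  { replace 8 with (INR 8) by (simpl; ring). apply le_INR; lia. }
  apply (comb h K N y HK HN).
  - intros i. unfold h.
    assert (Ey : y + IZR (Z.of_nat N) / INR N = (y + IZR 0 / INR N) + 1).
    { rewrite <- INR_IZR_INZ. field. lra. }
    pose proof (Hpol i (Z.of_nat N)) as E1. pose proof (Hpol i 0%Z) as E0.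
    pose proof (norm_pos _ _ (Hnz i (Z.of_nat N)) E1) as P1.
    pose proof (norm_pos _ _ (Hnz i 0%Z) E0) as P0.
    apply (e2pi_eq _ _ _ _ P1 P0). rewrite <- E1, <- E0.
    rewrite Ey. apply (proj1 (Hq _ _)).
  - intros j. unfold h.
    assert (Ex : x + IZR (Z.of_nat K) / INR K = (x + IZR 0 / INR K) + 1).
    { rewrite <- INR_IZR_INZ. field. lra. }
    pose proof (Hpol (Z.of_nat K) j) as E1. pose proof (Hpol 0%Z j) as E0.
    pose proof (norm_pos _ _ (Hnz (Z.of_nat K) j) E1) as P1.
    pose proof (norm_pos _ _ (Hnz 0%Z j) E0) as P0.
    destruct (e2pi_eq _ _ (H (x + IZR (Z.of_nat K) / INR K) (y + IZR j / INR N))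
      ((y + IZR j / INR N) + H (x + IZR 0 / INR K) (y + IZR j / INR N)) P1 P0) as [k Hk].
    + rewrite <- E1, <- Cmul_e2pi, <- E0. rewrite Ex. apply (proj2 (Hq _ _)).
    + exists k. lra.
Qed.
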